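(* Assume (A0), (A1), (A2) below. Then there is a positive constant $M$ such that $n_0^2\,|\Xi^3_i|\le M$ for all $i$ (and all $k$). (A0) For $i=1,\dots,k$, $\mathbf{X}_i=\{X_{i1},\dots,X_{in_i}\}$ is a random sample of size $n_i\ge2m$ from the distribution of a random element $X_i$ of a measurable space $(E,\mathcal{E})$, the samples independent. (A1) There is $M>0$ with $\mathbb{E}\{h^2(X_{i1},\dots,X_{im})\}<M$ for all $i$, $k$. (A2) $n_i=c_in_0$ with $n_0\ge2m$ and $1\le c_i\le C$ for a constant $C>0$.
   Context: $m\ge1$ is fixed and $h:E^m\to\mathbb{R}$ is a symmetric kernel; distributions and sample sizes may depend on $k$. Let $\theta_i=\mathbb{E}\{h(X_{i1},\dots,X_{im})\}$, and for $0\le c\le m$ let $h_{c}(x_1,\dots,x_c)=\mathbb{E}\{h(X_{i1},\dots,X_{im})\mid X_{i1}=x_1,\dots,X_{ic}=x_c\}$ (with $h_0=\theta_i$), $\widetilde{h}_c=h_c-\theta_i$, and $\widetilde{\zeta}^3_{i(c,j)}=\mathrm{Cov}\{\widetilde{h}_c(X_{i1},\dots,X_{ic}),\widetilde{h}_j(X_{i1},\dots,X_{ij})\widetilde{h}_{c-j}(X_{i(j+1)},\dots,X_{ic})\}$. Define $$\Xi^3_i=4\binom{n_i}{2m}^{-1}\binom{2m}{m}^{-1}\sum_{c=1}^m\binom{n_i-m}{2m-c}\binom{m}{c}\sum_{j=1}^c\binom{c}{j}\binom{2m-c}{m-j}\widetilde{\zeta}^3_{i(c,j)},$$ with $\binom{a}{b}=0$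 if $b>a$. *)

(* Defs.v *)
From HB Require Import structures.
From mathcomp Require Import all_boot all_order all_algebra perm.
From mathcomp Require Import all_classical all_reals all_analysis.
Set Implicit Arguments. Unset Strict Implicit. Unset Printing Implicit Defensive.
Import Order.TTheory GRing.Theory Num.Theory.
Local Open Scope classical_set_scope.
Local Open Scope ring_scope.

Definition symmetric_kernel (E : Type) (R : Type) (m : nat)
  (h : m.-tuple E -> R) : Prop :=
  forall (s : 'S_m) (t : m.-tuple E), h [tuple tnth t (s l) | l < m] = h t.

Definition mutually_independent (R : realType) (dO dE : measure_display)
  (O : measurableType dO) (E : measurableType dE) (P : probability O R)
  (I : eqType) (D : set I) (Y : I -> O -> E) : Prop :=
  forall (s : seq I) (A : I -> set E), uniq s -> (forall a, a \in s -> D a) ->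
    (forall a, measurable (A a)) ->
    P (\bigcap_(a in [set a | a \in s]) (Y a @^-1` A a)) =
    (\prod_(a <- s) P (Y a @^-1` A a))%E.

Section Ustat.
Variables (R : realType) (dO dE : measure_display).
Variables (O : measurableType dO) (E : measurableType dE) (P : probability O R).
Variables (m : nat) (h : m.-tuple E -> R).
(* Y l = X_{i,l+1} : the i-th sample (0-indexed) *)
Variable (Y : nat -> O -> E).

Definition theta : R := fine ('E_P[fun w => h [tuple Y l w | l < m]]).

(* h_c(x_1,...,x_c) = E h(x_1,...,x_c, X_{i(c+1)},...,X_{im})
   (x l stands for x_{l+1}; only x 0 .. x (c-1) are used) *)
Definition hcond (c : nat) (x : nat -> E) : R :=
  fine ('E_P[fun w => h [tuple (if (val l < c)%N then x (val l) else Y l w) | l < m]]).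

Definition htil (c : nat) (x : nat -> E) : R := hcond c x - theta.

Definition zeta3 (c j : nat) : R :=
  fine (covariance P
    (fun w => htil c (fun l => Y l w))
    (fun w => htil j (fun l => Y l w) * htil (c - j) (fun l => Y (j + l)%N w))).

Definition Xi3 (n : nat) : R :=
  4 / ('C(n, 2 * m)%:R * 'C(2 * m, m)%:R) *
  \sum_(1 <= c < m.+1)
     ('C(n - m, 2 * m - c)%:R * 'C(m, c)%:R *
      \sum_(1 <= j < c.+1) ('C(c, j)%:R * 'C(2 * m - c, m - j)%:R * zeta3 c j)).
End Ustat.

(* Main.v *)
Require Import Defs.
From HB Require Import structures.
From mathcomp Require Import all_boot all_order all_algebra perm.
From mathcomp Require Import all_classical all_reals all_analysis.
From mathcomp Require Import measurable_realfun.
From mathcomp Require Import lra ring zify.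
Import Order.TTheory GRing.Theory Num.Theory.
Local Open Scope classical_set_scope.
Local Open Scope ring_scope.
Set Implicit Arguments. Unset Strict Implicit. Unset Printing Implicit Defensive.
Definition mkmf d1 d2 (T1 : measurableType d1) (T2 : measurableType d2)
  (f : T1 -> T2) (mf : measurable_fun setT f) : {mfun T1 >-> T2} :=
  HB.pack f (isMeasurableFun.Build _ _ _ _ _ mf).

Section GenA.
Context (R : realType).

Lemma integral_distr d1 d2 (T1 : measurableType d1) (T2 : measurableType d2)
  (P : probability T1 R) (X : {mfun T1 >-> T2}) (f : T2 -> R) :
  measurable_fun setT f ->
  (\int[distribution P X]_y (f y)%:E = \int[P]_x (f (X x))%:E)%E.
Proof.
move=> mf.
rewrite integralE [RHS]integralE.
rewrite ge0_integral_distribution //; last first.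
  by apply: measurable_funepos; apply/measurable_EFinP.
rewrite ge0_integral_distribution //; last first.
  by apply: measurable_funeneg; apply/measurable_EFinP.
by rewrite -funepos_comp -funeneg_comp.
Qed.

Lemma Lfun2P d (T : measurableType d) (mu : {measure set T -> \bar R}) (f : T -> R) :
  measurable_fun setT f -> (\int[mu]_x ((f x) ^+ 2)%:E < +oo)%E ->
  f \in Lfun mu 2%:E.
Proof.
move=> mf fin.
rewrite inE; apply/andP; split; first by rewrite inE.
rewrite inE /= /finite_norm unlock /Lnorm.
apply: poweR_lty.
rewrite (eq_integral (fun x => ((f x) ^+ 2)%:E)) //.
move=> x _ /=; rewrite powR_mulrn //.
by rewrite real_normK // num_real.
Qed.

Lemma jensen2 d (T : measurableType d) (Q : probability T R) (g : T -> R) :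
  measurable_fun setT g ->
  (((fine (\int[Q]_x (g x)%:E)) ^+ 2)%:E <= \int[Q]_x ((g x) ^+ 2)%:E)%E.
Proof.
move=> mg.
have [fin|] := ltP (\int[Q]_x ((g x) ^+ 2)%:E)%E +oo%E; last first.
  by rewrite leye_eq => /eqP ->; rewrite leey.
have g2 : g \in Lfun Q 2%:E by exact: Lfun2P.
have := variance_ge0 Q g.
rewrite varianceE // => H.
have E1 : ('E_Q[g] = \int[Q]_x (g x)%:E)%E by rewrite unlock.
have E2 : ('E_Q[g ^+ 2] = \int[Q]_x ((g x) ^+ 2)%:E)%E by rewrite unlock.
rewrite -E1 -E2.
have gf : ('E_Q[g] \is a fin_num)%E.
  by apply: expectation_fin_num; apply: (Lfun_subset12 _ g2); exact: fin_num_measure.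
rewrite -(fineK gf) in H *.
by rewrite sube_ge0 ?fin_numX // in H.
Qed.

Lemma measurable_nth d (E : measurableType d) r i :
  measurable_fun setT (fun u : r.-tuple E => nth point u i).
Proof.
case: (ltnP i r) => ir.
  rewrite (_ : (fun u : r.-tuple E => _) = fun u => tnth u (Ordinal ir)).
    exact: measurable_tnth.
  by apply/funext => u; rewrite (tnth_nth point).
rewrite (_ : (fun u : r.-tuple E => _) = cst point); first exact: measurable_cst.
by apply/funext => u; rewrite nth_default // size_tuple.
Qed.

End GenA.
Section Rect.
Context d (E : measurableType d).

Definition rect r (A : nat -> set E) : set (r.-tuple E) :=
  [set u | forall i : 'I_r, A i (tnth u i)].
Arguments rect : clear implicits.

Definition Grect r : set (set (r.-tuple E)) :=
  [set S | exists A : nat -> set E, (forall l, measurable (A l)) /\ S = rect r A].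
Arguments Grect : clear implicits.

Lemma rect_measurable r A : (forall l, measurable (A l)) -> measurable (rect r A).
Proof.
move=> mA.
have -> : rect r A = \bigcap_(i in [set: 'I_r]) ((fun u : r.-tuple E => tnth u i) @^-1` A i).
  by apply/seteqP; split => u /=; [move=> H i _; exact: H | move=> H i; exact: H].
apply: fin_bigcap_measurable; first exact: finite_finset.
move=> i _; rewrite -[X in measurable X]setTI.
exact: (measurable_tnth i) (mA i).
Qed.

Lemma Grect_setT r : Grect r setT.
Proof. by exists (fun _ => setT); split => //; apply/seteqP; split. Qed.

Lemma Grect_setI r : setI_closed (Grect r).
Proof.
move=> _ _ [A [mA ->]] [B [mB ->]].
exists (fun l => A l `&` B l); split; first by move=> l; exact: measurableI.
by apply/seteqP; split => u /=; [move=> [H1 H2] i; split|move=> H; split => i; case: (H i)].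
Qed.

Lemma Grect_gen r : @measurable _ (r.-tuple E) = <<s Grect r >>.
Proof.
apply/seteqP; split; last first.
  apply: smallest_sub; first exact: sigma_algebra_measurable.
  by move=> _ [A [mA ->]]; exact: rect_measurable.
apply: smallest_sub; first exact: smallest_sigma_algebra.
case: r => [|r]; first by rewrite big_ord0.
rewrite -bigcup_mkord_ord => S [i /= ir [B mB <-]].
apply: sub_sigma_algebra.
exists (fun l => if l == i then B else setT); split.
  by move=> l; case: eqP.
apply/seteqP; split => u /=.
  move=> [_ Bu] j; case: eqP => // ji.
  have -> : j = inord i by apply/val_inj; rewrite /= inordK // ji.
  done.
move=> H; split => //; have := H (inord i).
by rewrite inordK // eqxx.
Qed.

Lemma prod_gen r q : @measurable _ (r.-tuple E * q.-tuple E)%type =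
  <<s [set S `*` T | S in Grect r & T in Grect q] >>.
Proof.
set G2 := [set S `*` T | S in Grect r & T in Grect q].
rewrite measurable_prod_measurableType.
apply/seteqP; split; last first.
  apply: smallest_sub; first exact: smallest_sigma_algebra.
  move=> _ [S GS [T GT <-]]; apply: sub_sigma_algebra; exists S.
    by rewrite Grect_gen; exact: sub_sigma_algebra.
  by exists T => //; rewrite Grect_gen; exact: sub_sigma_algebra.
apply: smallest_sub; first exact: smallest_sigma_algebra.
have H1 : <<s Grect r >> `<=` image_set_system setT fst <<s G2 >>.
  apply: smallest_sub.
    apply: sigma_algebra_image; exact: smallest_sigma_algebra.
  move=> S GS; rewrite /image_set_system /=.
  apply: sub_sigma_algebra; exists S => //; exists setT; first exact: Grect_setT.
  by apply/seteqP; split => -[u v] /=; [move=> [] | move=> [] _].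
have H2 : <<s Grect q >> `<=` image_set_system setT snd <<s G2 >>.
  apply: smallest_sub.
    apply: sigma_algebra_image; exact: smallest_sigma_algebra.
  move=> T GT; rewrite /image_set_system /=.
  apply: sub_sigma_algebra; exists setT; first exact: Grect_setT.
  by exists T.
move=> _ [S mS [T mT <-]].
rewrite Grect_gen in mS; rewrite Grect_gen in mT.
have A1 := H1 _ mS; have A2 := H2 _ mT.
rewrite /image_set_system /= in A1 A2.
have -> : S `*` T = ([set: r.-tuple E * q.-tuple E] `&` fst @^-1` S) `&`
                    ([set: r.-tuple E * q.-tuple E] `&` snd @^-1` T).
  by apply/seteqP; split => -[u v] /=; [move=> [] | move=> [[_ ?] [_ ?]]].
exact: (@measurableI _ (g_sigma_algebraType G2) _ _ A1 A2).
Qed.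

End Rect.
Arguments rect {d E} r A.
Arguments Grect {d E} r.
Section CovBound.
Context (R : realType) (d : measure_display) (T : measurableType d) (P : probability T R).

Lemma var_le_sq (A : T -> R) : A \in Lfun P 2%:E ->
  ('V_P[A] <= \int[P]_x ((A x) ^+ 2)%:E)%E.
Proof.
move=> A2; rewrite varianceE //.
have -> : ('E_P[A ^+ 2] = \int[P]_x ((A x) ^+ 2)%:E)%E by rewrite unlock.
have A1 : A \in Lfun P 1 by apply: (Lfun_subset12 _ A2); exact: fin_num_measure.
have hf : ('E_P[A] \is a fin_num)%E by exact: expectation_fin_num.
have h2 : (\int[P]_x ((A x) ^+ 2)%:E \is a fin_num)%E.
  have := Lfun2_integrable_sqr A2 => /integrable_fin_num; exact.
rewrite -(fineK hf) -(fineK h2) -EFin_expe -EFinB lee_fin.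
by rewrite lerBlDr lerDl sqr_ge0.
Qed.

Lemma cov_bound (A B : T -> R) (a b : R) :
  measurable_fun setT A -> measurable_fun setT B ->
  (\int[P]_x ((A x) ^+ 2)%:E <= a%:E)%E -> (\int[P]_x ((B x) ^+ 2)%:E <= b%:E)%E ->
  `| fine (covariance P A B) | <= (a + b) / 2.
Proof.
move=> mA mB hA hB.
have A2 : A \in Lfun P 2%:E by apply: Lfun2P => //; exact: le_lt_trans hA (ltry _).
have B2 : B \in Lfun P 2%:E by apply: Lfun2P => //; exact: le_lt_trans hB (ltry _).
have Pfin : (P setT \is a fin_num)%E by exact: fin_num_measure.
have A1 := Lfun_subset12 Pfin A2.
have B1 := Lfun_subset12 Pfin B2.
have NA2 : (\- A) \in Lfun P 2%:E.
  apply: Lfun2P; first exact: measurableT_comp.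
  by under eq_integral do rewrite /= sqrrN; exact: le_lt_trans hA (ltry _).
have NA1 := Lfun_subset12 Pfin NA2.
have c1 := covariance_le A2 B2.
have c2 := covariance_le NA2 B2.
rewrite covarianceNl ?Lfun2_mul_Lfun1 // in c2.
have hNA : (\int[P]_x (((\- A) x) ^+ 2)%:E <= a%:E)%E.
  by under eq_integral do rewrite /= sqrrN.
have cf : (covariance P A B \is a fin_num)%E.
  by apply: covariance_fin_num => //; exact: Lfun2_mul_Lfun1.
have vaf := variance_fin_num A2.
have vnaf := variance_fin_num NA2.
have vna0 := variance_ge0 P (\- A).
have vnaa := le_trans (var_le_sq NA2) hNA.
have vbf := variance_fin_num B2.
have va0 := variance_ge0 P A.
have vb0 := variance_ge0 P B.
have vaa := le_trans (var_le_sq A2) hA.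
have vbb := le_trans (var_le_sq B2) hB.
move: c1 c2 va0 vb0 vaa vbb vna0 vnaa.
rewrite -(fineK cf) -(fineK vaf) -(fineK vbf) -(fineK vnaf) /=.
set c := fine (covariance P A B); set va := fine 'V_P[A]; set vb := fine 'V_P[B].
set vna := fine _.
rewrite -!EFinM !lee_fin => c1 c2 va0 vb0 vaa vbb vna0 vnaa.
have sa := sqr_sqrtr va0; have sb := sqr_sqrtr vb0; have sna := sqr_sqrtr vna0.
have sa0 := sqrtr_ge0 va; have sb0 := sqrtr_ge0 vb; have sna0 := sqrtr_ge0 vna.
have key : Num.sqrt va * Num.sqrt vb <= (va + vb) / 2.
  rewrite -[in X in _ <= X]sa -[in X in _ <= X]sb.
  have := sqr_ge0 (Num.sqrt va - Num.sqrt vb); rewrite !expr2; nra.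
have key2 : Num.sqrt vna * Num.sqrt vb <= (vna + vb) / 2.
  rewrite -[in X in _ <= X]sna -[in X in _ <= X]sb.
  have := sqr_ge0 (Num.sqrt vna - Num.sqrt vb); rewrite !expr2; nra.
rewrite ler_norml; apply/andP; split; lra.
Qed.

End CovBound.
Section Sample.
Context (R : realType) (dO : measure_display) (O : measurableType dO)
  (P : probability O R) (d : measure_display) (E : measurableType d)
  (mu : probability E R) (Y : nat -> O -> E) (n : nat).
Hypothesis mY : forall l, measurable_fun setT (Y l).
Hypothesis lawY : forall l A, (l < n)%N -> measurable A -> P (Y l @^-1` A) = mu A.
Hypothesis indY : forall (s : seq nat) (A : nat -> set E), uniq s ->
  (forall l, l \in s -> (l < n)%N) -> (forall l, measurable (A l)) ->
  P (\bigcap_(l in [set l | l \in s]) (Y l @^-1` A l)) =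
  (\prod_(l <- s) P (Y l @^-1` A l))%E.

Lemma prodY (s : seq nat) (A : nat -> set E) : uniq s ->
  (forall l, l \in s -> (l < n)%N) -> (forall l, measurable (A l)) ->
  P (\bigcap_(l in [set l | l \in s]) (Y l @^-1` A l)) =
  (\prod_(l <- s) mu (A l))%E.
Proof.
move=> us sn mA; rewrite indY // big_seq_cond [RHS]big_seq_cond.
by apply: eq_bigr => l /andP[ls _]; exact: lawY (sn _ ls) (mA l).
Qed.

Definition blk a r : O -> r.-tuple E := fun w => [tuple Y (a + val l) w | l < r].
Arguments blk : clear implicits.

Lemma mblk a r : measurable_fun setT (blk a r).
Proof.
apply/measurable_fun_tnthP => i.
rewrite (_ : _ \o _ = Y (a + i)); first exact: mY.
by apply/funext => w /=; rewrite tnth_mktuple.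
Qed.

Definition L r := distribution P (mkmf (@mblk 0 r)).
Arguments L : clear implicits.

Lemma prod_iota (F : nat -> \bar R) a r :
  (\prod_(l <- iota a r) F l = \prod_(i < r) F (a + i)%N)%E.
Proof.
rewrite -[in LHS](addn0 a) iotaDl big_map.
have -> : iota 0 r = index_iota 0 r by rewrite /index_iota subn0.
by rewrite big_mkord.
Qed.

Lemma rect_prob2 a r b q A B : (a + r <= b)%N -> (b + q <= n)%N ->
  (forall l, measurable (A l)) -> (forall l, measurable (B l)) ->
  P (blk a r @^-1` rect r A `&` blk b q @^-1` rect q B) =
  ((\prod_(i < r) mu (A i)) * \prod_(i < q) mu (B i))%E.
Proof.
move=> hab hbn mA mB.
set s := iota a r ++ iota b q.
pose C := fun l => if (l < b)%N then A (l - a)%N else B (l - b)%N.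
have -> : blk a r @^-1` rect r A `&` blk b q @^-1` rect q B =
    \bigcap_(l in [set l | l \in s]) (Y l @^-1` C l).
  apply/seteqP; split => w /=.
  - move=> [H1 H2] l /=; rewrite /s mem_cat !mem_iota => /orP[/andP[al lar]|/andP[bl lbq]].
    + have lb : (l < b)%N by apply: leq_trans hab.
      rewrite /C lb.
      have lr : (l - a < r)%N by rewrite ltn_subLR.
      by have := H1 (Ordinal lr); rewrite tnth_mktuple /= subnKC.
    + rewrite /C ltnNge bl /=.
      have lq : (l - b < q)%N by rewrite ltn_subLR.
      by have := H2 (Ordinal lq); rewrite tnth_mktuple /= subnKC.
  - move=> H; split => i; rewrite tnth_mktuple.
    + have := H (a + i)%N; rewrite /= /s /C mem_cat mem_iota leq_addr ltn_add2l ltn_ord /=.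
      have -> : (a + i < b)%N by apply: leq_trans hab; rewrite ltn_add2l.
      by rewrite addKn; apply.
    + have := H (b + i)%N; rewrite /= /s /C mem_cat !mem_iota leq_addr ltn_add2l ltn_ord /= orbT.
      by rewrite ltnNge leq_addr /= addKn; apply.
rewrite prodY //.
- rewrite big_cat /= !prod_iota; congr (_ * _)%E.
    apply: eq_bigr => i _; rewrite /C addKn.
    by have -> : (a + i < b)%N by apply: leq_trans hab; rewrite ltn_add2l.
  by apply: eq_bigr => i _; rewrite /C ltnNge leq_addr /= addKn.
- rewrite cat_uniq !iota_uniq /= andbT; apply/hasPn => x; rewrite !mem_iota.
  move=> /andP[bx _]; apply/negP => /andP[_ xa]. 
  by have := leq_trans xa hab; rewrite ltnNge bx.
- move=> l; rewrite mem_cat !mem_iota => /orP[/andP[_ H]|/andP[_ H]].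
    by apply: leq_trans H _; apply: leq_trans hab _; apply: leq_trans hbn; exact: leq_addr.
  exact: leq_trans H hbn.
- by move=> l; rewrite /C; case: ifP.
Qed.

Lemma rect_prob a r A : (a + r <= n)%N -> (forall l, measurable (A l)) ->
  P (blk a r @^-1` rect r A) = (\prod_(i < r) mu (A i))%E.
Proof.
move=> han mA.
have := @rect_prob2 a r (a + r) 0 A (fun _ => setT) (leqnn _) _ mA (fun _ => measurableT).
rewrite addn0 => /(_ han).
rewrite big_ord0 mule1 => <-; congr (P _).
by apply/seteqP; split => w /=; [move=> H; split => // i; case: i | case].
Qed.

Lemma indep_integral a r b q (F : r.-tuple E * q.-tuple E -> \bar R) :
  (a + r <= b)%N -> (b + q <= n)%N -> measurable_fun setT F -> (forall z, 0 <= F z)%E ->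
  (\int[P]_w F (blk a r w, blk b q w) = \int[L r]_u \int[L q]_v F (u, v))%E.
Proof.
move=> hab hbn mF F0.
have mb2 : measurable_fun setT (fun w => (blk a r w, blk b q w)).
  exact: measurable_fun_pair (@mblk a r) (@mblk b q).
pose Q := distribution P (mkmf mb2).
have hr : (r <= n)%N.
  by apply: leq_trans (leq_addl a r) _; apply: leq_trans hab _; apply: leq_trans hbn; exact: leq_addr.
have hq : (q <= n)%N by apply: leq_trans (leq_addl b q) hbn.
have QE : forall S, measurable S -> (L r \x L q)%E S = Q S.
  move=> S mS.
  apply: (@measure_unique _ R _ [set S `*` T | S in Grect r & T in Grect q]
    (fun _ => setT) (prod_gen E r q)) => //.
  - move=> _ _ [S1 GS1 [T1 GT1 <-]] [S2 GS2 [T2 GT2 <-]].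
    rewrite -setXI; exists (S1 `&` S2); first exact: Grect_setI.
    by exists (T1 `&` T2) => //; exact: Grect_setI.
  - move=> _; exists setT; first exact: Grect_setT.
    by exists setT; [exact: Grect_setT | rewrite setXTT].
  - by apply/seteqP; split => z //= _; exists 0%N.
  - move=> _ [_ [A [mA ->]] [_ [B [mB ->]] <-]].
    transitivity (L r (rect r A) * L q (rect q B))%E.
      by apply: product_measure1E; exact: rect_measurable.
    have e1 : L r (rect r A) = (\prod_(i < r) mu (A i))%E by exact: (@rect_prob 0 r A).
    have e2 : L q (rect q B) = (\prod_(i < q) mu (B i))%E by exact: (@rect_prob 0 q B).
    rewrite e1 e2 -(@rect_prob2 a r b q A B) //.
  - move=> _; have := probability_setT (L r \x L q)%E; rewrite /= => ->.
    exact: ltry.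
transitivity (\int[Q]_z F z)%E.
  by rewrite ge0_integral_distribution.
rewrite (eq_measure_integral (L r \x L q)%E); last by move=> S mS _; exact: (esym (QE S mS)).
exact: fubini_tonelli1.
Qed.

Lemma law_integral a r (F : r.-tuple E -> \bar R) :
  (a + r <= n)%N -> measurable_fun setT F -> (forall u, 0 <= F u)%E ->
  (\int[P]_w F (blk a r w) = \int[L r]_u F u)%E.
Proof.
move=> han mF F0.
have := @indep_integral a r (a + r) 0 (fun z => F z.1) (leqnn _).
rewrite addn0 => /(_ han (measurableT_comp mF measurable_fst) (fun z => F0 _)) /= ->.
apply: eq_integral => u _.
rewrite integral_cst //; transitivity (F u * 1)%E; last exact: mule1.
by congr (_ * _)%E; exact: (probability_setT (L 0)).
Qed.

Variables (m : nat) (h : m.-tuple E -> R) (M : R).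
Hypothesis hm : measurable_fun setT h.
Hypothesis mn : (m <= n)%N.
Let S2 := (\int[P]_w ((h [tuple Y (val l) w | l < m]) ^+ 2)%:E)%E.
Hypothesis hM : (S2 < M%:E)%E.

Definition merge c (u : c.-tuple E) (v : (m - c).-tuple E) : m.-tuple E :=
  [tuple (if (val l < c)%N then nth point u l else nth point v (l - c)) | l < m].

Lemma mmerge c : measurable_fun setT
  (fun z : c.-tuple E * (m - c).-tuple E => merge z.1 z.2).
Proof.
apply/measurable_fun_tnthP => i.
rewrite (_ : _ \o _ = fun z : c.-tuple E * (m - c).-tuple E =>
   if (val i < c)%N then nth point z.1 i else nth point z.2 (i - c)); last first.
  by apply/funext => z /=; rewrite tnth_mktuple.
case: (val i < c)%N.
  exact: (measurableT_comp (@measurable_nth _ E c i) measurable_fst).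
exact: (measurableT_comp (@measurable_nth _ E (m - c) (i - c)) measurable_snd).
Qed.

Lemma mmerge_l c (u : c.-tuple E) :
  measurable_fun setT (fun v : (m - c).-tuple E => merge u v).
Proof.
have := measurable_fun_pair2 u (@mmerge c).
apply: eq_measurable_fun => v _ //.
Qed.

Definition H c (u : c.-tuple E) : R :=
  fine (\int[L (m - c)]_v (h (merge u v))%:E)%E.

Lemma mH c : measurable_fun setT (@H c).
Proof.
pose g := fun z : c.-tuple E * (m - c).-tuple E => (h (merge z.1 z.2))%:E.
have mg : measurable_fun setT g.
  by apply/measurable_EFinP; exact: measurableT_comp hm (@mmerge c).
rewrite (_ : @H c = fun u => fine (fubini_F (L (m - c)) g^\+ u
                                   - fubini_F (L (m - c)) g^\- u)%E)%E.
  apply: measurableT_comp; first exact: fine_measurable.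
  apply: emeasurable_funB.
    apply: measurable_fun_fubini_tonelli_F; first exact: measurable_funepos.
    by move=> z; exact: funepos_ge0.
  apply: measurable_fun_fubini_tonelli_F; first exact: measurable_funeneg.
  by move=> z; exact: funeneg_ge0.
apply/funext => u; rewrite /H integralE /fubini_F.
congr (fine (_ - _))%E; apply: eq_integral => v _.
  by rewrite !funeposE.
by rewrite !funenegE.
Qed.

Lemma law_integral_signed a r (g : r.-tuple E -> R) :
  (a + r <= n)%N -> measurable_fun setT g ->
  (\int[P]_w (g (blk a r w))%:E = \int[L r]_u (g u)%:E)%E.
Proof.
move=> han mg.
have mg' : measurable_fun setT (fun u => (g u)%:E) by exact/measurable_EFinP.
have p1 := @law_integral a r (fun u => ((fun u => (g u)%:E)^\+ u)%E) han
  (measurable_funepos mg') (fun u => funepos_ge0 _ u).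
have p2 := @law_integral a r (fun u => ((fun u => (g u)%:E)^\- u)%E) han
  (measurable_funeneg mg') (fun u => funeneg_ge0 _ u).
rewrite integralE [RHS]integralE -p1 -p2.
congr (_ - _)%E; apply: eq_integral => w _.
  by rewrite !funeposE.
by rewrite !funenegE.
Qed.

Lemma merge_tuple c (x : nat -> E) w : (c <= m)%N ->
  merge [tuple x (val l) | l < c] (blk c (m - c) w) =
  [tuple (if (val l < c)%N then x (val l) else Y l w) | l < m].
Proof.
move=> cm; apply: eq_mktuple => l.
case: ifP => lc.
  by rewrite (nth_mktuple _ _ (Ordinal lc)).
move/negbT: lc; rewrite -leqNgt => lc.
have lm : (val l < m)%N := ltn_ord l.
have lc' : (val l - c < m - c)%N by lia.
by rewrite /blk (nth_mktuple _ _ (Ordinal lc')) /= subnKC.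
Qed.

Lemma hcondE c (x : nat -> E) : (c <= m)%N ->
  hcond P h Y c x = @H c [tuple x (val l) | l < c].
Proof.
move=> cm; rewrite /hcond /H; congr fine.
rewrite unlock.
rewrite -(@law_integral_signed c (m - c) (fun v => h (merge [tuple x (val l) | l < c] v))).
- by apply: eq_integral => w _; rewrite merge_tuple.
- by rewrite subnKC.
- exact: measurableT_comp hm (mmerge_l _).
Qed.

Lemma thetaE : theta P h Y = fine (\int[P]_w (h [tuple Y (val l) w | l < m])%:E)%E.
Proof. by rewrite /theta unlock. Qed.

Lemma mhY : measurable_fun setT (fun w => h [tuple Y (val l) w | l < m]).
Proof. exact: measurableT_comp hm (@mblk 0 m). Qed.

Lemma theta_sq : (((theta P h Y) ^+ 2)%:E <= S2)%E.
Proof. rewrite thetaE; exact: jensen2 mhY. Qed.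

Lemma H_int c a : (c <= m)%N -> (a + c <= n)%N ->
  (\int[P]_w ((@H c (blk a c w)) ^+ 2)%:E <= S2)%E.
Proof.
move=> cm acn.
have mH2 : measurable_fun setT (fun u => ((@H c u) ^+ 2)%:E).
  by apply/measurable_EFinP; exact: measurable_funX (@mH c).
pose g := fun z : c.-tuple E * (m - c).-tuple E => ((h (merge z.1 z.2)) ^+ 2)%:E.
have mg : measurable_fun setT g.
  apply/measurable_EFinP; apply: measurable_funX.
  exact: measurableT_comp hm (@mmerge c).
have g0 : forall z, (0 <= g z)%E by move=> z; rewrite lee_fin sqr_ge0.
rewrite (@law_integral a c (fun u => ((@H c u) ^+ 2)%:E)) //; last first.
  by move=> u; rewrite lee_fin sqr_ge0.
apply: (@le_trans _ _ (\int[L c]_u fubini_F (L (m - c)) g u)%E).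
  apply: ge0_le_integral => //.
  - by move=> u _; rewrite lee_fin sqr_ge0.
  - exact: measurable_fun_fubini_tonelli_F.
  - move=> u _; rewrite /fubini_F /g /=.
    apply: jensen2; exact: measurableT_comp hm (mmerge_l _).
rewrite /fubini_F -(@indep_integral 0 c c (m - c) g) //; last by rewrite subnKC.
rewrite le_eqVlt; apply/orP; left; apply/eqP.
apply: eq_integral => w _; rewrite /g /=.
congr ((h _ ^+ 2)%:E).
by rewrite (merge_tuple (fun l => Y l w) w cm); apply: eq_mktuple => l; case: ifP.
Qed.

Definition fc c (u : c.-tuple E) : R := @H c u - theta P h Y.

Lemma mfc c : measurable_fun setT (@fc c).
Proof. by apply: measurable_funB => //; exact: (@mH c). Qed.

Lemma fc_int c a : (c <= m)%N -> (a + c <= n)%N ->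
  (\int[P]_w ((@fc c (blk a c w)) ^+ 2)%:E <= (4 * M)%:E)%E.
Proof.
move=> cm acn.
set t := theta P h Y.
have mHb : measurable_fun setT (fun w => @H c (blk a c w)).
  exact: measurableT_comp (@mH c) (@mblk a c).
apply: (@le_trans _ _ (\int[P]_w ((2 * (@H c (blk a c w)) ^+ 2)%:E + (2 * t ^+ 2)%:E))%E).
  apply: ge0_le_integral => //.
  - by move=> w _; rewrite lee_fin sqr_ge0.
  - apply/measurable_EFinP; apply: measurable_funX.
    exact: measurable_funB.
  - apply: emeasurable_funD => //.
    apply/measurable_EFinP; apply: measurable_funM => //.
    exact: measurable_funX.
  - move=> w _; rewrite -EFinD lee_fin /fc.
    set x := H _; rewrite -/t; have := sqr_ge0 (x + t); rewrite !expr2; nra.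
rewrite ge0_integralD //; last 3 first.
- by move=> w _; rewrite lee_fin mulr_ge0 // sqr_ge0.
- apply/measurable_EFinP; apply: measurable_funM => //.
  exact: measurable_funX.
- by move=> w _; rewrite lee_fin mulr_ge0 // sqr_ge0.
rewrite integral_cst //.
rewrite (_ : (2 * t ^+ 2)%:E * _ = (2 * t ^+ 2)%:E)%E; last first.
  by transitivity ((2 * t ^+ 2)%:E * 1)%E; [congr (_ * _)%E; exact: probability_setT | exact: mule1].
under eq_integral do rewrite EFinM.
rewrite ge0_integralZl_EFin //; last 2 first.
- by move=> w _; rewrite lee_fin sqr_ge0.
- by apply/measurable_EFinP; exact: measurable_funX.
have h1 := le_lt_trans (H_int cm acn) hM.
have h2 := le_lt_trans theta_sq hM.
have hf : (\int[P]_w ((@H c (blk a c w)) ^+ 2)%:E \is a fin_num)%E.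
  rewrite ge0_fin_numE; first exact: lt_trans h1 (ltry _).
  by apply: integral_ge0 => w _; rewrite lee_fin sqr_ge0.
move: h1 h2; rewrite -(fineK hf) !lte_fin => h1 h2.
rewrite -EFinM -EFinD lee_fin -/t in h2 *; lra.
Qed.

Lemma L_fc r : (r <= m)%N ->
  (\int[L r]_u ((@fc r u) ^+ 2)%:E <= (4 * M)%:E)%E.
Proof.
move=> rm.
have r0n : (0 + r <= n)%N by rewrite add0n; exact: leq_trans rm mn.
rewrite -(@law_integral 0 r (fun u => ((@fc r u) ^+ 2)%:E)).
- exact: (@fc_int r 0 rm r0n).
- exact: r0n.
- by apply/measurable_EFinP; apply: measurable_funX; exact: (@mfc r).
- by move=> u; rewrite lee_fin sqr_ge0.
Qed.

Lemma zeta_bound c j : (j <= c)%N -> (c <= m)%N ->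
  `| zeta3 P h Y c j | <= (4 * M + 16 * M ^+ 2) / 2.
Proof.
move=> jc cm.
have jm : (j <= m)%N by exact: leq_trans jc cm.
have cjm : (c - j <= m)%N by apply: leq_trans cm; exact: leq_subr.
rewrite /zeta3.
have eA : (fun w => htil P h Y c (fun l => Y l w)) = (fun w => @fc c (blk 0 c w)).
  by apply/funext => w; rewrite /htil hcondE.
have eB : (fun w => htil P h Y j (fun l => Y l w) * htil P h Y (c - j) (fun l => Y (j + l)%N w))
    = (fun w => @fc j (blk 0 j w) * @fc (c - j) (blk j (c - j) w)).
  by apply/funext => w; rewrite /htil !hcondE.
rewrite eA eB.
apply: cov_bound.
- exact: measurableT_comp (@mfc c) (@mblk 0 c).
- apply: measurable_funM.
    exact: measurableT_comp (@mfc j) (@mblk 0 j).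
  exact: measurableT_comp (@mfc (c - j)) (@mblk j (c - j)).
- apply: fc_int => //; exact: leq_trans cm mn.
pose F := fun z : j.-tuple E * (c - j).-tuple E =>
  (((@fc j z.1) ^+ 2) * ((@fc (c - j) z.2) ^+ 2))%:E.
have mF : measurable_fun setT F.
  apply/measurable_EFinP; apply: measurable_funM.
    apply: measurable_funX; exact: measurableT_comp (@mfc j) measurable_fst.
  apply: measurable_funX; exact: measurableT_comp (@mfc (c - j)) measurable_snd.
have F0 : forall z, (0 <= F z)%E by move=> z; rewrite lee_fin mulr_ge0 // sqr_ge0.
have -> : (\int[P]_w (((@fc j (blk 0 j w) * @fc (c - j) (blk j (c - j) w)) ^+ 2)%:E)
   = \int[P]_w F (blk 0 j w, blk j (c - j) w))%E.
  by apply: eq_integral => w _; rewrite /F /= exprMn.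
rewrite (@indep_integral 0 j j (c - j) F) //; last by rewrite subnKC //; exact: leq_trans cm mn.
have inner : forall u, (\int[L (c - j)]_v F (u, v) =
    ((@fc j u) ^+ 2)%:E * \int[L (c - j)]_v ((@fc (c - j) v) ^+ 2)%:E)%E.
  move=> u; rewrite /F /=.
  under eq_integral do rewrite EFinM.
  rewrite ge0_integralZl_EFin //.
  - by move=> v _; rewrite lee_fin sqr_ge0.
  - by apply/measurable_EFinP; apply: measurable_funX; exact: (@mfc _).
  - exact: sqr_ge0.
under eq_integral do rewrite inner.
rewrite ge0_integralZr //; last 3 first.
- by apply/measurable_EFinP; apply: measurable_funX; exact: (@mfc _).
- by move=> u _; rewrite lee_fin sqr_ge0.
- by apply: integral_ge0 => v _; rewrite lee_fin sqr_ge0.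
have b1 := L_fc jm.
have b2 := L_fc cjm.
rewrite (_ : 16 * M ^+ 2 = (4 * M) * (4 * M)); last by ring.
rewrite EFinM; apply: lee_pmul => //.
- by apply: integral_ge0 => v _; rewrite lee_fin sqr_ge0.
- by apply: integral_ge0 => v _; rewrite lee_fin sqr_ge0.
Qed.
End Sample.
Section Binom.

Lemma bin_step1 m n k : (2 * m <= n)%N -> (k < 2 * m)%N ->
  (n * 'C(n, k) <= (2 * m) ^ 2 * 'C(n, k.+1))%N.
Proof.
move=> hn hk.
have e := mul_bin_left n k.
have h1 : (n <= 2 * m * (n - k))%N by nia.
apply: (@leq_trans (2 * m * (n - k) * 'C(n, k))); first exact: leq_mul.
rewrite -mulnA -e mulnA expnS expn1 leq_mul2r leq_mul2l.
by apply/orP; right; apply/orP; right.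
Qed.

Lemma bin_step2 m n k : (2 * m <= n)%N -> (k < 2 * m)%N ->
  ('C(n, k) <= 2 * m * 'C(n, k.+1))%N.
Proof.
move=> hn hk.
have e := mul_bin_left n k.
apply: (@leq_trans ((n - k) * 'C(n, k))).
  by rewrite leq_pmull // subn_gt0; apply: leq_trans hk hn.
by rewrite -e leq_mul2r hk orbT.
Qed.

Lemma bin_up m n k : (2 * m <= n)%N -> (k <= 2 * m)%N ->
  ('C(n, k) <= (2 * m) ^ (2 * m - k) * 'C(n, 2 * m))%N.
Proof.
move=> hn; move: {2}(2 * m - k)%N (erefl (2 * m - k)%N) => t.
elim: t k => [|t IH] k ht hk.
  have -> : k = (2 * m)%N by lia.
  by rewrite subnn expn0 mul1n.
have hk' : (k < 2 * m)%N by lia.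
apply: leq_trans (bin_step2 hn hk') _.
rewrite ht expnS -[in X in (_ <= X)%N]mulnA leq_mul2l; apply/orP; right.
have e : (2 * m - k.+1 = t)%N by lia.
by have := IH k.+1 e hk'; rewrite e.
Qed.

Lemma bin_main m n k : (2 * m <= n)%N -> (k + 2 <= 2 * m)%N ->
  (n ^ 2 * 'C(n, k) <= 16 * m ^ 4 * (2 * m) ^ (2 * m) * 'C(n, 2 * m))%N.
Proof.
move=> hn hk.
have s1 := bin_step1 hn (_ : k < 2 * m)%N.
have s2 := bin_step1 hn (_ : k.+1 < 2 * m)%N.
have s3 := bin_step2 hn (_ : k.+1 < 2 * m)%N.
have u := bin_up hn (_ : k.+2 <= 2 * m)%N.
apply: (@leq_trans (n * ((2 * m) ^ 2 * 'C(n, k.+1)))).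
  by rewrite expnS expn1 -mulnA leq_mul2l s1 ?orbT //; lia.
apply: (@leq_trans ((2 * m) ^ 2 * ((2 * m) ^ 2 * 'C(n, k.+2)))).
  rewrite mulnCA leq_mul2l; apply/orP; right; apply: s2; lia.
apply: (@leq_trans ((2 * m) ^ 2 * ((2 * m) ^ 2 * ((2 * m) ^ (2 * m - k.+2) * 'C(n, 2 * m))))).
  rewrite !leq_mul2l; apply/orP; right; apply/orP; right; apply: u; lia.
have hp : ((2 * m) ^ (2 * m - k.+2) <= (2 * m) ^ (2 * m))%N.
  apply: leq_pexp2l; first lia.
  exact: leq_subr.
have e16 : ((2 * m) ^ 2 * (2 * m) ^ 2 = 16 * m ^ 4)%N.
  by rewrite -expnD expnMn.
rewrite mulnA e16 -!mulnA leq_mul2l; apply/orP; right.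
by rewrite !leq_mul2l leq_mul2r hp !orbT.
Qed.

End Binom.
Section Ext.
Context (R : realType) (dO dE : measure_display) (O : measurableType dO)
  (E : measurableType dE) (P : probability O R) (m : nat) (h : m.-tuple E -> R).

Lemma htil0 (Y : nat -> O -> E) x : htil P h Y 0 x = 0.
Proof.
by rewrite /htil; apply/eqP; rewrite subr_eq0; apply/eqP.
Qed.

Lemma zeta_cc (Y : nat -> O -> E) c : zeta3 P h Y c c = 0.
Proof.
rewrite /zeta3 subnn.
have -> : (fun w => htil P h Y c (fun l => Y l w) * htil P h Y 0 (fun l => Y (c + l)%N w))
   = cst 0.
  by apply/funext => w; rewrite htil0 mulr0.
by rewrite covariance_cst_r.
Qed.

Lemma hcond_ext (Y1 Y2 : nat -> O -> E) c x1 x2 :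
  (forall l, (l < m)%N -> Y1 l = Y2 l) -> (forall l, (l < c)%N -> x1 l = x2 l) ->
  hcond P h Y1 c x1 = hcond P h Y2 c x2.
Proof.
move=> hY hx; rewrite /hcond; do 2 f_equal; apply/funext => w; f_equal.
apply: eq_mktuple => l; case: ifP => lc; first exact: hx.
by rewrite hY.
Qed.

Lemma theta_ext (Y1 Y2 : nat -> O -> E) :
  (forall l, (l < m)%N -> Y1 l = Y2 l) -> theta P h Y1 = theta P h Y2.
Proof.
move=> hY; rewrite /theta; do 2 f_equal; apply/funext => w; f_equal.
by apply: eq_mktuple => l; rewrite hY.
Qed.

Lemma htil_ext (Y1 Y2 : nat -> O -> E) c x1 x2 :
  (forall l, (l < m)%N -> Y1 l = Y2 l) -> (forall l, (l < c)%N -> x1 l = x2 l) ->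
  htil P h Y1 c x1 = htil P h Y2 c x2.
Proof. by move=> hY hx; rewrite /htil (hcond_ext hY hx) (theta_ext hY). Qed.

Lemma zeta3_ext (Y1 Y2 : nat -> O -> E) c j : (c <= m)%N -> (j <= c)%N ->
  (forall l, (l < m)%N -> Y1 l = Y2 l) -> zeta3 P h Y1 c j = zeta3 P h Y2 c j.
Proof.
move=> cm jc hY; rewrite /zeta3.
have e1 : (fun w => htil P h Y1 c (fun l => Y1 l w)) = (fun w => htil P h Y2 c (fun l => Y2 l w)).
  apply/funext => w; apply: htil_ext => // l lc.
  by rewrite hY //; apply: leq_trans lc cm.
have e2 : (fun w => htil P h Y1 j (fun l => Y1 l w) * htil P h Y1 (c - j) (fun l => Y1 (j + l)%N w))
   = (fun w => htil P h Y2 j (fun l => Y2 l w) * htil P h Y2 (c - j) (fun l => Y2 (j + l)%N w)).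
  apply/funext => w; congr (_ * _); apply: htil_ext => // l lc.
    by rewrite hY //; lia.
  by rewrite hY //; lia.
by rewrite e1 e2.
Qed.

Lemma Xi3_ext (Y1 Y2 : nat -> O -> E) n :
  (forall l, (l < m)%N -> Y1 l = Y2 l) -> Xi3 P h Y1 n = Xi3 P h Y2 n.
Proof.
move=> hY; rewrite /Xi3; congr (_ * _); apply: eq_big_nat => c /andP[c1 cm].
congr (_ * _); apply: eq_big_nat => j /andP[_ jc].
by rewrite (zeta3_ext cm jc hY).
Qed.

End Ext.
Section XiBound.
Context (R : realType).

Definition Wm (m : nat) : R :=
  \sum_(1 <= c < m.+1) ('C(m, c)%:R * \sum_(1 <= j < c.+1) ('C(c, j)%:R * 'C(2 * m - c, m - j)%:R)).

Lemma Wm_ge0 m : 0 <= Wm m.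
Proof.
apply: sumr_ge0 => c _; apply: mulr_ge0 => //.
by apply: sumr_ge0 => j _; apply: mulr_ge0.
Qed.

Definition Km (m : nat) : nat := (16 * m ^ 4 * (2 * m) ^ (2 * m))%N.

Lemma Xi_bound (m nn n0 : nat) (z : nat -> nat -> R) (Z : R) :
  (1 <= m)%N -> (2 * m <= nn)%N -> n0%:R <= nn%:R :> R -> 0 <= Z ->
  (forall c j, (j <= c)%N -> (c <= m)%N -> `|z c j| <= Z) -> z 1%N 1%N = 0 ->
  n0%:R ^+ 2 * `| 4 / ('C(nn, 2 * m)%:R * 'C(2 * m, m)%:R) *
     \sum_(1 <= c < m.+1) ('C(nn - m, 2 * m - c)%:R * 'C(m, c)%:R *
        \sum_(1 <= j < c.+1) ('C(c, j)%:R * 'C(2 * m - c, m - j)%:R * z c j)) |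
  <= 4 * (Km m)%:R * Z * Wm m.
Proof.
move=> m1 hnn hn0 Z0 hz z11.
set Cn := 'C(nn, 2 * m).
have Cn0 : (0 < Cn)%N by rewrite bin_gt0.
have Cm0 : (0 < 'C(2 * m, m))%N by rewrite bin_gt0 leq_pmull.
have CnR : 0 < Cn%:R :> R by rewrite ltr0n.
have CmR : 1 <= 'C(2 * m, m)%:R :> R by rewrite ler1n.
have D0 : 0 < Cn%:R * 'C(2 * m, m)%:R :> R by apply: mulr_gt0 => //; lra.
have n00 : 0 <= n0%:R :> R by [].
rewrite normrM (ger0_norm (_ : 0 <= 4 / _)); last first.
  by apply: divr_ge0 => //; apply: ltW.
have term : forall c, (1 <= c < m.+1)%N ->
   n0%:R ^+ 2 * `|'C(nn - m, 2 * m - c)%:R * 'C(m, c)%:R *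
        \sum_(1 <= j < c.+1) ('C(c, j)%:R * 'C(2 * m - c, m - j)%:R * z c j)|
   <= (Km m)%:R * Cn%:R * ('C(m, c)%:R *
        \sum_(1 <= j < c.+1) ('C(c, j)%:R * 'C(2 * m - c, m - j)%:R)) * Z :> R.
  move=> c /andP[c1 cm].
  have cm' : (c <= m)%N by [].
  have rhs0 : 0 <= (Km m)%:R * Cn%:R * ('C(m, c)%:R *
        \sum_(1 <= j < c.+1) ('C(c, j)%:R * 'C(2 * m - c, m - j)%:R)) * Z :> R.
    apply: mulr_ge0 => //; apply: mulr_ge0 => //; apply: mulr_ge0 => //.
    by apply: sumr_ge0 => j _; apply: mulr_ge0.
  have [c1e|c2] := eqVneq c 1%N.
    by rewrite c1e in rhs0 *; rewrite big_nat1 z11 mulr0 mulr0 normr0 mulr0.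
  have c2' : (2 <= c)%N by rewrite ltn_neqAle eq_sym c2 c1.
  have hT : `|\sum_(1 <= j < c.+1) ('C(c, j)%:R * 'C(2 * m - c, m - j)%:R * z c j)|
      <= (\sum_(1 <= j < c.+1) ('C(c, j)%:R * 'C(2 * m - c, m - j)%:R)) * Z :> R.
    apply: le_trans (ler_norm_sum _ _ _) _.
    rewrite mulr_suml; apply: ler_sum_nat => j /andP[j1 jc].
    rewrite normrM ger0_norm; last by apply: mulr_ge0.
    by apply: ler_wpM2l; [apply: mulr_ge0 | apply: hz].
  have hbin : (n0 ^ 2 * 'C(nn - m, 2 * m - c) <= Km m * Cn)%N.
    apply: (@leq_trans (nn ^ 2 * 'C(nn, 2 * m - c))).
      apply: leq_mul.
        by rewrite leq_exp2r //; rewrite -(ler_nat R).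
      by apply: leq_bin2l; exact: leq_subr.
    by apply: bin_main => //; lia.
  have hbinR : n0%:R ^+ 2 * 'C(nn - m, 2 * m - c)%:R <= (Km m)%:R * Cn%:R :> R.
    by rewrite -natrX -!natrM ler_nat.
  rewrite normrM (ger0_norm (_ : 0 <= _ * _)); last by apply: mulr_ge0.
  move: hT hbinR.
  set T := \sum_(1 <= j < c.+1) (_ * z c j).
  set B := \sum_(1 <= j < c.+1) _.
  set a := 'C(nn - m, 2 * m - c)%:R; set b := 'C(m, c)%:R => hT hbinR.
  have b0 : 0 <= b by [].
  rewrite (_ : n0%:R ^+ 2 * (a * b * `|T|) = (n0%:R ^+ 2 * a) * (b * `|T|)); last by ring.
  rewrite (_ : (Km m)%:R * Cn%:R * (b * B) * Z = ((Km m)%:R * Cn%:R) * (b * (B * Z))); last by ring.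
  apply: ler_pM => //.
  - by apply: mulr_ge0 => //; apply: exprn_ge0.
  - by apply: mulr_ge0.
  - by apply: ler_wpM2l.
apply: (@le_trans _ _ (4 / (Cn%:R * 'C(2 * m, m)%:R) *
   \sum_(1 <= c < m.+1) ((Km m)%:R * Cn%:R * ('C(m, c)%:R *
        \sum_(1 <= j < c.+1) ('C(c, j)%:R * 'C(2 * m - c, m - j)%:R)) * Z))).
  rewrite mulrCA; apply: ler_wpM2l; first by apply: divr_ge0 => //; apply: ltW.
  apply: le_trans (_ : _ <= n0%:R ^+ 2 * \sum_(1 <= c < m.+1)
     `|'C(nn - m, 2 * m - c)%:R * 'C(m, c)%:R *
        \sum_(1 <= j < c.+1) ('C(c, j)%:R * 'C(2 * m - c, m - j)%:R * z c j)|) _.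
    by apply: ler_wpM2l; [exact: exprn_ge0 | exact: ler_norm_sum].
  rewrite mulr_sumr; apply: ler_sum_nat => c hc; exact: term.
rewrite -mulr_suml -mulr_sumr -/(Wm m).
set S := Wm m.
have S0 : 0 <= S by exact: (Wm_ge0 m).
have K0 : 0 <= (Km m)%:R :> R by [].
rewrite [X in X <= _](_ : _ = 4 * (Km m)%:R * Z * S / 'C(2 * m, m)%:R); last first.
  field; apply/andP; split; rewrite pnatr_eq0 -lt0n //.
rewrite ler_pdivrMr; last lra.
rewrite -[X in X <= _]mulr1; apply: ler_wpM2l => //.
by apply: mulr_ge0 => //; apply: mulr_ge0.
Qed.

End XiBound.
Theorem lemma8 (R : realType) (dE : measure_display) (E : measurableType dE)
  (m : nat) (h : m.-tuple E -> R) (M C : R) :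
  (1 <= m)%N -> measurable_fun setT h -> symmetric_kernel h ->
  0 < M -> 0 < C ->
  exists M' : R, 0 < M' /\
  forall (k : nat) (dO : measure_display) (O : measurableType dO)
    (P : probability O R) (mu : 'I_k -> probability E R)
    (X : 'I_k -> nat -> O -> E) (n : 'I_k -> nat) (n0 : nat) (c : 'I_k -> R),
    (* (A0) *)
    (forall i, (2 * m <= n i)%N) ->
    (forall i j, (j < n i)%N -> measurable_fun setT (X i j)) ->
    (forall i j A, (j < n i)%N -> measurable A -> P (X i j @^-1` A) = mu i A) ->
    mutually_independent P [set ij | (ij.2 < n ij.1)%N] (fun ij => X ij.1 ij.2) ->
    (* (A1) *)
    (forall i, ('E_P[fun w => ((h [tuple X i l w | l < m]) ^+ 2)%R] < M%:E)%E) ->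
    (* (A2) *)
    (2 * m <= n0)%N ->
    (forall i, (n i)%:R = c i * n0%:R /\ 1 <= c i <= C) ->
    forall i : 'I_k, n0%:R ^+ 2 * `|Xi3 P h (X i) (n i)| <= M'.
Proof.
move=> m1 hmeas hsym M0 C0.
pose Z : R := (4 * M + 16 * M ^+ 2) / 2.
have Z0 : 0 <= Z.
  rewrite /Z; apply: divr_ge0 => //; apply: addr_ge0.
    by apply: mulr_ge0 => //; exact: ltW.
  by apply: mulr_ge0 => //; exact: sqr_ge0.
have W0 := Wm_ge0 R m.
have K0 : 0 <= (Km m)%:R :> R by [].
have P0 : 0 <= 4 * (Km m)%:R * Z * Wm R m.
  by apply: mulr_ge0 => //; apply: mulr_ge0 => //; apply: mulr_ge0.
exists (4 * (Km m)%:R * Z * Wm R m + 1); split; first lra.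
move=> k dO O P mu X n n0 c hn hX hlaw hind h2 hn0 hc i.
pose Y' : nat -> O -> E := fun l w => if (l < n i)%N then X i l w else point.
have hmn : (m <= n i)%N by have := hn i; lia.
have eY : forall l, (l < m)%N -> X i l = Y' l.
  move=> l lm; apply/funext => w; rewrite /Y'.
  by rewrite (leq_trans lm hmn).
rewrite (@Xi3_ext R dO dE O E P m h (X i) Y' (n i) eY).
have mY : forall l, measurable_fun setT (Y' l).
  move=> l; rewrite /Y'; case hl: (l < n i)%N.
    exact: hX.
  exact: measurable_cst.
have lawY : forall l A, (l < n i)%N -> measurable A -> P (Y' l @^-1` A) = mu i A.
  move=> l A ln mA.
  rewrite (_ : Y' l = X i l); first exact: hlaw.
  by apply/funext => w; rewrite /Y' ln.
have indY : forall (s : seq nat) (A : nat -> set E), uniq s ->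
  (forall l, l \in s -> (l < n i)%N) -> (forall l, measurable (A l)) ->
  P (\bigcap_(l in [set l | l \in s]) (Y' l @^-1` A l)) =
  (\prod_(l <- s) P (Y' l @^-1` A l))%E.
  move=> s A us sn mA.
  have := hind (map (fun l => (i, l)) s) (fun ij => A ij.2).
  rewrite big_map map_inj_uniq //; last by move=> x y [].
  move=> /(_ us) Hind.
  have e1 : \bigcap_(l in [set l | l \in s]) (Y' l @^-1` A l) =
     \bigcap_(a in [set a | a \in map (fun l => (i, l)) s]) (X a.1 a.2 @^-1` A a.2).
    apply/seteqP; split => w /= H.
      move=> a /= /mapP[l ls ->] /=.
      by have := H l ls; rewrite /= /Y' (sn l ls).
    move=> l ls; have := H (i, l) (map_f _ ls).
    by rewrite /= /Y' (sn l ls).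
  have e2 : (\prod_(l <- s) P (Y' l @^-1` A l) = \prod_(l <- s) P (X i l @^-1` A l))%E.
    rewrite big_seq_cond [RHS]big_seq_cond; apply: eq_bigr => l /andP[ls _].
    by congr (P _); apply/seteqP; split => w /=; rewrite /Y' (sn l ls).
  rewrite e1 e2 Hind //.
  move=> a /mapP[l ls ->] /=; exact: sn.
have hM : (\int[P]_w ((h [tuple Y' (val l) w | l < m]) ^+ 2)%:E < M%:E)%E.
  have := h2 i; rewrite unlock.
  congr (_ < _)%E; apply: eq_integral => w _ /=.
  congr (((h _) ^+ 2)%:E); apply: eq_mktuple => l.
  by rewrite (eY l (ltn_ord l)).
have n0n : n0%:R <= (n i)%:R :> R.
  have [-> /andP[c1 _]] := hc i.
  have : 0 <= n0%:R :> R by [].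
  nra.
apply: le_trans (_ : _ <= 4 * (Km m)%:R * Z * Wm R m) _; last lra.
apply: Xi_bound => //.
- move=> cc j jc cm.
  exact: (zeta_bound mY lawY indY hmeas hmn hM jc cm).
- exact: zeta_cc.
Qed.
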